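(* Let $\|\cdot\|$ be a strictly convex norm on $\mathbb R^2$ that is $C^1$ on $\mathbb R^2\setminus\{0\}$. Then $\mathrm c^{\mathrm{ENT}}(z^+,z^-)\le\Pi(z^+,z^-)$ for all distinct $z^+,z^-\in\partial\mathsf B$.
   Context: $\mathsf B=\{\|z\|<1\}$ normalized so that $\partial\mathsf B$ has length $2\pi$; $\gamma$ is its counterclockwise arc-length parametrization; $\mathbb R^2\cong\mathbb C$, $i$ = rotation by $\pi/2$. $\alpha$ is continuous with $\gamma'=e^{i\alpha}$, and $\Pi(\gamma(\theta_1),\gamma(\theta_2))=\int_{\theta_1}^{\theta_2}\int_{\theta_1}^{\theta_2}|\alpha(t)-\alpha(s)|\,dt\,ds$ for $|\theta_1-\theta_2|\le\pi$. For distinct $z^\pm$: $\nu=i\frac{z^+-z^-}{|z^+-z^-|}$ and $\mathrm c^{\mathrm{ENT}}(z^+,z^-)=\sup_{\lambda\in\Lambda_*}\int_{\theta^-}^{\theta^+}\lambda(t)\gamma'(t)\cdot\nu\,dt$ with $z^\pm=\gamma(\theta^\pm)$, $\Lambda_*=\{\lambda\in C^1(\mathbb R/2\pi\mathbb Z):\int_{\mathbb R/2\pi\mathbb Z}\lambda\gamma'=0,\ \|\lambda'\|_\infty\le1\}$. *)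

(* Defs.v *)
From Stdlib Require Import Reals.
From Coquelicot Require Import Coquelicot.
Open Scope R_scope.

Definition vsub (z w : R * R) : R * R := (fst z - fst w, snd z - snd w).
Definition dot (z w : R * R) : R := fst z * fst w + snd z * snd w.
Definition enorm (z : R * R) : R := sqrt (dot z z).
(* multiplication by i = rotation by pi/2 *)
Definition rot90 (z : R * R) : R * R := (- snd z, fst z).
Definition vadd (z w : R * R) : R * R := (fst z + fst w, snd z + snd w).
Definition vscal (c : R) (z : R * R) : R * R := (c * fst z, c * snd z).

Definition is_norm (N : R * R -> R) : Prop :=
  (forall z, N z = 0 <-> z = (0, 0)) /\
  (forall c z, N (vscal c z) = Rabs c * N z) /\
  (forall z w, N (vadd z w) <= N z + N w).

Definition strictly_convex (N : R * R -> R) : Prop :=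
  forall z w t, N z = 1 -> N w = 1 -> z <> w -> 0 < t < 1 ->
    N (vadd (vscal t z) (vscal (1 - t) w)) < 1.

Definition C1_away0 (N : R * R -> R) : Prop :=
  forall x y, (x, y) <> (0, 0) ->
    ex_derive (fun u => N (u, y)) x /\
    ex_derive (fun v => N (x, v)) y /\
    continuity_2d_pt (fun u v => Derive (fun u' => N (u', v)) u) x y /\
    continuity_2d_pt (fun u v => Derive (fun v' => N (u, v')) v) x y.

(* gamma : R -> R^2 is the counterclockwise arc-length parametrization of
   dB = {N z = 1}, with period 2*PI (this encodes the normalization
   "dB has length 2 pi"), and alpha is continuous with gamma' = e^{i alpha}. *)
Definition ccw_arclength_param (N : R * R -> R) (gamma : R -> R * R)
    (alpha : R -> R) : Prop :=
  (forall t, gamma (t + 2 * PI) = gamma t) /\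
  (forall t, N (gamma t) = 1) /\
  (forall z, N z = 1 -> exists t, 0 <= t < 2 * PI /\ gamma t = z) /\
  (forall t s, 0 <= t < 2 * PI -> 0 <= s < 2 * PI -> gamma t = gamma s -> t = s) /\
  (forall t, continuous alpha t) /\
  (forall t, is_derive (fun s => fst (gamma s)) t (cos (alpha t)) /\
             is_derive (fun s => snd (gamma s)) t (sin (alpha t))) /\
  (* counterclockwise orientation *)
  (forall t, 0 < fst (gamma t) * sin (alpha t) - snd (gamma t) * cos (alpha t)).

(* gamma'(t) = e^{i alpha(t)} *)
Definition dgamma (alpha : R -> R) (t : R) : R * R := (cos (alpha t), sin (alpha t)).

Definition Lambda_star (alpha : R -> R) (lam : R -> R) : Prop :=
  (forall t, lam (t + 2 * PI) = lam t) /\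
  (forall t, ex_derive lam t) /\
  (forall t, continuous (Derive lam) t) /\
  (forall t, Rabs (Derive lam t) <= 1) /\
  RInt (fun t => lam t * cos (alpha t)) 0 (2 * PI) = 0 /\
  RInt (fun t => lam t * sin (alpha t)) 0 (2 * PI) = 0.

Definition nu (zp zm : R * R) : R * R :=
  vscal (/ enorm (vsub zp zm)) (rot90 (vsub zp zm)).

Definition cENT (gamma : R -> R * R) (alpha : R -> R) (thp thm : R) : Rbar :=
  Lub_Rbar (fun v => exists lam, Lambda_star alpha lam /\
    v = RInt (fun t => lam t * dot (dgamma alpha t) (nu (gamma thp) (gamma thm))) thm thp).

Definition Pi_ent (alpha : R -> R) (th1 th2 : R) : R :=
  RInt (fun t => RInt (fun s => Rabs (alpha t - alpha s)) th1 th2) th1 th2.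

(* Main.v *)
Require Import Defs.
From Stdlib Require Import Reals Lra.
From Coquelicot Require Import Coquelicot.
Open Scope R_scope.

Lemma cpt (f : R -> R) x : continuous f x -> continuity_pt f x.
Proof. intro H. now apply continuity_pt_filterlim. Qed.

Lemma ptc (f : R -> R) x : continuity_pt f x -> continuous f x.
Proof. intro H. now apply continuity_pt_filterlim. Qed.

Lemma Rabs_diff_le (a b c : R) : Rabs (Rabs (a - c) - Rabs (b - c)) <= Rabs (a - b).
Proof.
  unfold Rabs; repeat destruct Rcase_abs; lra.
Qed.

Lemma Dlip (n1 n2 : R) : n1 ^ 2 + n2 ^ 2 = 1 -> forall x y,
  Rabs ((cos x * n1 + sin x * n2) - (cos y * n1 + sin y * n2)) <= Rabs (x - y).
Proof.
  intros Hn x y.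
  destruct (MVT_gen (fun u => cos u * n1 + sin u * n2) y x
     (fun u => - sin u * n1 + cos u * n2)) as [c [_ Hc]].
  - intros z _. auto_derive; [exact I| ring].
  - intros z _. apply cpt. apply (ex_derive_continuous (K := R_AbsRing) (V := R_NormedModule)). auto_derive. exact I.
  - simpl in Hc. rewrite Hc, Rabs_mult.
    rewrite <- (Rmult_1_l (Rabs (x - y))) at 2.
    apply Rmult_le_compat_r; [apply Rabs_pos|].
    assert (Hs := sin2_cos2 c). unfold Rsqr in Hs.
    assert (Hq : (- sin c * n1 + cos c * n2) ^ 2 <= 1).
    { assert (E : (- sin c * n1 + cos c * n2) ^ 2 + (cos c * n1 + sin c * n2) ^ 2
            = (n1 ^ 2 + n2 ^ 2) * (sin c * sin c + cos c * cos c)) by ring.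
      rewrite Hn, Hs in E. assert (0 <= (cos c * n1 + sin c * n2) ^ 2) by (apply pow2_ge_0).
      lra. }
    apply Rabs_le. nra.
Qed.

Lemma lamlip (lam : R -> R) : (forall t, ex_derive lam t) ->
  (forall t, Rabs (Derive lam t) <= 1) -> forall x y, Rabs (lam x - lam y) <= Rabs (x - y).
Proof.
  intros Hd Hb x y.
  destruct (MVT_gen lam y x (Derive lam)) as [c [_ Hc]].
  - intros z _. apply Derive_correct. apply Hd.
  - intros z _. apply cpt. apply (ex_derive_continuous (K := R_AbsRing) (V := R_NormedModule)). apply Hd.
  - rewrite Hc, Rabs_mult.
    rewrite <- (Rmult_1_l (Rabs (x - y))) at 2.
    apply Rmult_le_compat_r; [apply Rabs_pos| apply Hb].
Qed.

Lemma contA (alpha : R -> R) : (forall t, continuous alpha t) ->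
  forall t s, continuous (fun s => Rabs (alpha t - alpha s)) s.
Proof.
  intros Ha t s. apply ptc. apply continuity_pt_comp with (f2 := Rabs).
  - apply continuity_pt_minus. apply continuity_pt_const. intros u v; reflexivity.
    apply cpt, Ha.
  - apply Rcontinuity_abs.
Qed.

Lemma exA (alpha : R -> R) : (forall t, continuous alpha t) ->
  forall t a b, ex_RInt (fun s => Rabs (alpha t - alpha s)) a b.
Proof.
  intros Ha t a b. apply (ex_RInt_continuous (V := R_CompleteNormedModule)). intros z _. apply contA, Ha.
Qed.

Lemma Gcont (alpha : R -> R) lo hi : (forall t, continuous alpha t) -> lo <= hi ->
  forall t, continuous (fun t => RInt (fun s => Rabs (alpha t - alpha s)) lo hi) t.
Proof.
  intros Ha Hlh t.
  assert (Hb : forall y, Rabs (RInt (fun s => Rabs (alpha y - alpha s)) lo hi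
                  - RInt (fun s => Rabs (alpha t - alpha s)) lo hi)
                 <= (hi - lo) * Rabs (alpha y - alpha t)).
  { intro y.
    assert (E : RInt (fun s => Rabs (alpha y - alpha s)) lo hi
                  - RInt (fun s => Rabs (alpha t - alpha s)) lo hi
               = RInt (fun s => Rabs (alpha y - alpha s) - Rabs (alpha t - alpha s)) lo hi).
    { symmetry. apply (RInt_minus (V := R_CompleteNormedModule)); apply exA; exact Ha. }
    rewrite E. apply abs_RInt_le_const; [exact Hlh| |].
    - apply (ex_RInt_minus (V := R_CompleteNormedModule)); apply exA; exact Ha.
    - intros s _. apply Rabs_diff_le. }
  apply filterlim_locally. intro eps.
  assert (Hp : 0 < eps / (hi - lo + 1)).
  { apply Rdiv_lt_0_compat; [apply cond_pos| lra]. }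
  assert (H := proj1 (filterlim_locally alpha (alpha t)) (Ha t) (mkposreal _ Hp)).
  eapply filter_imp; [|exact H].
  intros y Hy. unfold ball in *; simpl in *. unfold AbsRing_ball, abs, minus, plus, opp in *; simpl in *.
  eapply Rle_lt_trans; [apply Hb|].
  assert (Hy' : Rabs (alpha y - alpha t) * (hi - lo + 1) < eps).
  { apply Rmult_lt_reg_r with (/ (hi - lo + 1)). apply Rinv_0_lt_compat; lra.
    rewrite Rmult_assoc, Rinv_r by lra. rewrite Rmult_1_r. exact Hy. }
  assert (0 <= Rabs (alpha y - alpha t)) by apply Rabs_pos.
  nra.
Qed.

Lemma contD (alpha : R -> R) n1 n2 : (forall t, continuous alpha t) ->
  forall t, continuous (fun t => cos (alpha t) * n1 + sin (alpha t) * n2) t.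
Proof.
  intros Ha t. apply ptc.
  apply continuity_pt_plus; apply continuity_pt_mult.
  - apply continuity_pt_comp with (f2 := cos). apply cpt, Ha. apply continuity_cos.
  - apply continuity_pt_const. intros u v; reflexivity.
  - apply continuity_pt_comp with (f2 := sin). apply cpt, Ha. apply continuity_sin.
  - apply continuity_pt_const. intros u v; reflexivity.
Qed.

Lemma exC (f : R -> R) a b : (forall t, continuous f t) -> ex_RInt f a b.
Proof.
  intros H. apply (ex_RInt_continuous (V := R_CompleteNormedModule)). intros; apply H.
Qed.

Lemma RInt_minusR (f g : R -> R) a b : ex_RInt f a b -> ex_RInt g a b ->
  RInt (fun x => f x - g x) a b = RInt f a b - RInt g a b.
Proof.
  intros Hf Hg. exact (RInt_minus (V := R_CompleteNormedModule) f g a b Hf Hg).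
Qed.

Lemma RInt_constR a b c : RInt (fun _ => c) a b = (b - a) * c.
Proof. exact (RInt_const (V := R_CompleteNormedModule) a b c). Qed.

Lemma core (alpha lam : R -> R) n1 n2 lo hi : lo < hi ->
  (forall t, continuous alpha t) -> (forall t, ex_derive lam t) ->
  (forall t, Rabs (Derive lam t) <= 1) -> n1 ^ 2 + n2 ^ 2 = 1 ->
  RInt (fun t => cos (alpha t) * n1 + sin (alpha t) * n2) lo hi = 0 ->
  Rabs (RInt (fun t => lam t * (cos (alpha t) * n1 + sin (alpha t) * n2)) lo hi)
  <= RInt (fun t => RInt (fun s => Rabs (alpha t - alpha s)) lo hi) lo hi.
Proof.
  intros Hlh Ha Hd Hb Hn HD0.
  set (D := fun t => cos (alpha t) * n1 + sin (alpha t) * n2) in *.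
  assert (cD : forall t, continuous D t) by (apply contD; exact Ha).
  assert (cl : forall t, continuous lam t).
  { intro t. apply (ex_derive_continuous (K := R_AbsRing) (V := R_NormedModule)). apply Hd. }
  assert (clD : forall t, continuous (fun t => lam t * D t) t).
  { intro t. apply ptc. apply continuity_pt_mult; apply cpt; auto. }
  assert (chD : forall t, continuous (fun t => (lam t - lam lo) * D t) t).
  { intro t. apply ptc. apply continuity_pt_mult; [|apply cpt; auto].
    apply continuity_pt_minus; [apply cpt; auto|]. apply continuity_pt_const.
    intros u v; reflexivity. }
  assert (E1 : RInt (fun t => lam t * D t) lo hi = RInt (fun t => (lam t - lam lo) * D t) lo hi).
  { rewrite (RInt_ext (fun t => (lam t - lam lo) * D t) (fun t => lam t * D t - lam lo * D t));
      [| intros x _; simpl; ring].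
    rewrite RInt_minusR.
    - assert (E : RInt (fun t => lam lo * D t) lo hi = lam lo * RInt D lo hi).
      { exact (RInt_scal (V := R_CompleteNormedModule) D lo hi (lam lo) (exC D lo hi cD)). }
      rewrite E, HD0, Rmult_0_r, Rminus_0_r. reflexivity.
    - apply exC; auto.
    - apply exC. intro t. apply ptc. apply continuity_pt_mult; [|apply cpt; auto].
      apply continuity_pt_const. intros u v; reflexivity. }
  change (Rabs (RInt (fun t => lam t * D t) lo hi) <= RInt (fun t => RInt (fun s => Rabs (alpha t - alpha s)) lo hi) lo hi). rewrite E1.
  eapply Rle_trans.
  { apply abs_RInt_le; [lra| apply exC; auto]. }
  apply RInt_le; [lra| | |].
  - apply exC. intro t. apply ptc. apply continuity_pt_comp with (f2 := Rabs).
    apply cpt; auto. apply Rcontinuity_abs.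
  - apply exC. apply Gcont; [exact Ha| lra].
  - intros x Hx.
    assert (Hl : Rabs (lam x - lam lo) <= hi - lo).
    { eapply Rle_trans; [apply lamlip; auto|]. rewrite Rabs_right by lra. lra. }
    assert (E2 : (hi - lo) * D x = RInt (fun s => D x - D s) lo hi).
    { rewrite RInt_minusR; [| apply exC; intro; apply ptc, continuity_pt_const; intros u v; reflexivity
                            | apply exC; auto].
      rewrite RInt_constR, HD0. ring. }
    assert (H3 : Rabs ((hi - lo) * D x) <= RInt (fun s => Rabs (alpha x - alpha s)) lo hi).
    { rewrite E2. eapply Rle_trans.
      { apply abs_RInt_le; [lra|]. apply exC. intro t. apply ptc.
        apply continuity_pt_minus; [apply continuity_pt_const; intros u v; reflexivity|].
        apply cpt; auto. }
      apply RInt_le; [lra| | apply exA; exact Ha|].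
      - apply exC. intro t. apply ptc. apply continuity_pt_comp with (f2 := Rabs).
        apply continuity_pt_minus; [apply continuity_pt_const; intros u v; reflexivity|].
        apply cpt; auto. apply Rcontinuity_abs.
      - intros s _. unfold D. apply Dlip. exact Hn. }
    rewrite Rabs_mult. rewrite Rabs_mult, (Rabs_right (hi - lo)) in H3 by lra.
    eapply Rle_trans; [|exact H3].
    apply Rmult_le_compat_r; [apply Rabs_pos| exact Hl].
Qed.

Lemma Pi_sym (alpha : R -> R) a b : (forall t, continuous alpha t) -> a <= b ->
  RInt (fun t => RInt (fun s => Rabs (alpha t - alpha s)) b a) b a
  = RInt (fun t => RInt (fun s => Rabs (alpha t - alpha s)) a b) a b.
Proof.
  intros Ha Hab.
  set (G := fun t => RInt (fun s => Rabs (alpha t - alpha s)) a b).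
  rewrite (RInt_ext _ (fun t => - G t)).
  2:{ intros x _. unfold G. symmetry.
      exact (opp_RInt_swap (V := R_CompleteNormedModule) _ a b (exA alpha Ha x a b)). }
  assert (exG : forall c d, ex_RInt G c d).
  { intros c d. apply exC. apply Gcont; assumption. }
  assert (E := RInt_opp (V := R_CompleteNormedModule) G b a (exG b a)).
  simpl in E. unfold opp in E; simpl in E. rewrite E.
  exact (opp_RInt_swap (V := R_CompleteNormedModule) G b a (exG b a)).
Qed.

Lemma intzero (gamma : R -> R * R) (alpha : R -> R) :
  (forall t, is_derive (fun s => fst (gamma s)) t (cos (alpha t)) /\
             is_derive (fun s => snd (gamma s)) t (sin (alpha t))) ->
  (forall t, continuous alpha t) ->
  forall a b n1 n2, RInt (fun t => cos (alpha t) * n1 + sin (alpha t) * n2) a b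
    = n1 * (fst (gamma b) - fst (gamma a)) + n2 * (snd (gamma b) - snd (gamma a)).
Proof.
  intros Hd Ha a b n1 n2.
  assert (H1 : is_RInt (fun t => cos (alpha t)) a b (fst (gamma b) - fst (gamma a))).
  { apply (is_RInt_derive (V := R_CompleteNormedModule) (fun s => fst (gamma s))).
    - intros x _. apply Hd.
    - intros x _. apply ptc. apply continuity_pt_comp with (f2 := cos). apply cpt, Ha.
      apply continuity_cos. }
  assert (H2 : is_RInt (fun t => sin (alpha t)) a b (snd (gamma b) - snd (gamma a))).
  { apply (is_RInt_derive (V := R_CompleteNormedModule) (fun s => snd (gamma s))).
    - intros x _. apply Hd.
    - intros x _. apply ptc. apply continuity_pt_comp with (f2 := sin). apply cpt, Ha.
      apply continuity_sin. }
  apply (is_RInt_unique (V := R_CompleteNormedModule)).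
  apply (is_RInt_ext (V := R_CompleteNormedModule)
    (fun t => plus (scal n1 (cos (alpha t))) (scal n2 (sin (alpha t))))).
  { intros x _. unfold plus, scal; simpl. unfold mult; simpl. ring. }
  exact (is_RInt_plus (V := R_CompleteNormedModule) _ _ a b _ _
          (is_RInt_scal (V := R_CompleteNormedModule) _ a b n1 _ H1)
          (is_RInt_scal (V := R_CompleteNormedModule) _ a b n2 _ H2)).
Qed.

Theorem lemma6p5 (N : R * R -> R) (gamma : R -> R * R) (alpha : R -> R) :
  is_norm N -> strictly_convex N -> C1_away0 N ->
  ccw_arclength_param N gamma alpha ->
  forall thp thm : R, gamma thp <> gamma thm -> Rabs (thp - thm) <= PI ->
    Rbar_le (cENT gamma alpha thp thm) (Finite (Pi_ent alpha thp thm)).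
Proof.
  intros _ _ _ [_ [_ [_ [_ [Ha [Hd _]]]]]] thp thm Hneq _.
  set (n := nu (gamma thp) (gamma thm)).
  set (v1 := fst (gamma thp) - fst (gamma thm)).
  set (v2 := snd (gamma thp) - snd (gamma thm)).
  assert (Hv : v1 * v1 + v2 * v2 > 0).
  { destruct (Req_dec v1 0) as [E1|E1]; [destruct (Req_dec v2 0) as [E2|E2]|].
    - exfalso. apply Hneq. unfold v1, v2 in *.
      destruct (gamma thp), (gamma thm); simpl in *. f_equal; lra.
    - nra.
    - nra. }
  assert (Hn1 : fst n = / sqrt (v1 * v1 + v2 * v2) * - v2) by reflexivity.
  assert (Hn2 : snd n = / sqrt (v1 * v1 + v2 * v2) * v1) by reflexivity.
  assert (Hnorm : fst n ^ 2 + snd n ^ 2 = 1).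
  { rewrite Hn1, Hn2.
    assert (Hs := sqrt_sqrt (v1 * v1 + v2 * v2) ltac:(lra)).
    assert (Hp := sqrt_lt_R0 _ Hv).
    set (q := sqrt (v1 * v1 + v2 * v2)) in *.
    replace ((/ q * - v2) ^ 2 + (/ q * v1) ^ 2) with ((v1 * v1 + v2 * v2) / (q * q))
      by (field; lra).
    rewrite Hs. field. lra. }
  assert (Hz : forall a b, (a = thm /\ b = thp) \/ (a = thp /\ b = thm) ->
     @eq R (RInt (fun t => cos (alpha t) * fst n + sin (alpha t) * snd n) a b) 0).
  { intros a b Hab. rewrite (intzero gamma alpha Hd Ha). rewrite Hn1, Hn2.
    destruct Hab as [[-> ->]|[-> ->]]; unfold v1, v2; ring. }
  unfold cENT.
  destruct (Lub_Rbar_correct (fun v => exists lam, Lambda_star alpha lam /\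
    v = RInt (fun t => lam t * dot (dgamma alpha t) (nu (gamma thp) (gamma thm))) thm thp))
    as [_ Hlub].
  apply Hlub. intros x [lam [[_ [Hld [_ [Hlb _]]]] ->]]. simpl.
  fold n. unfold dot, dgamma. simpl.
  destruct (Rtotal_order thm thp) as [Hlt|[Heq|Hgt]].
  - eapply Rle_trans; [apply Rle_abs|].
    eapply Rle_trans.
    { apply (core alpha lam (fst n) (snd n) thm thp); auto. }
    unfold Pi_ent. rewrite (Pi_sym alpha thm thp); [apply Rle_refl| exact Ha| lra].
  - exfalso. apply Hneq. rewrite Heq. reflexivity.
  - assert (E := opp_RInt_swap (V := R_CompleteNormedModule)
       (fun t => lam t * (cos (alpha t) * fst n + sin (alpha t) * snd n)) thp thm).
    simpl in E. unfold opp in E; simpl in E. rewrite <- E.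
    2:{ apply exC. intro t. apply ptc. apply continuity_pt_mult.
        apply cpt, (ex_derive_continuous (K := R_AbsRing) (V := R_NormedModule)), Hld.
        apply cpt, contD, Ha. }
    eapply Rle_trans; [apply Rle_abs|]. rewrite Rabs_Ropp.
    apply (core alpha lam (fst n) (snd n) thp thm); auto.
Qed.
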